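(* Let $\mathcal A\subset\mathbb{R}$ be a finite, non-empty set with $|\mathcal A+\mathcal A|=K|\mathcal A|$ for some $K\ge 1$. Then \[ \sup_{n\in\mathbb{Z}} r_{\mathcal A}(n)\le r_{\mathcal A}(0)\ll K^2|\mathcal A|^2\log(2|\mathcal A|) \qquad\text{and}\qquad I_3(\mathcal A)\ll K^4|\mathcal A|^8(\log(2|\mathcal A|))^2, \] with absolute implied constants.
   Context: $\mathcal A+\mathcal A=\{a+b:a,b\in\mathcal A\}$. For $n\in\mathbb{Z}$, $r_{\mathcal A}(n)$ is the number of $(a_1,a_2,a_3,a_4)\in\mathcal A^4$ with $a_1a_2-a_3a_4=n$, and $I_3(\mathcal A)=\sum_{n\in\mathbb{Z}} r_{\mathcal A}(n)^3$. *)

(* Defs.v *)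
From HB Require Import structures.
From mathcomp Require Import all_boot all_order all_algebra.
From mathcomp Require Import reals exp.
Set Implicit Arguments. Unset Strict Implicit. Unset Printing Implicit Defensive.
Import Order.TTheory GRing.Theory Num.Theory.
Local Open Scope ring_scope.

Section Defs.
Variable R : realType.

Definition sumset (A : seq R) : seq R := undup [seq a + b | a <- A, b <- A].

Definition quad_vals (A : seq R) : seq R :=
  [seq p.1 - p.2 | p <- [seq (x, y) | x <- [seq a1 * a2 | a1 <- A, a2 <- A],
                                       y <- [seq a3 * a4 | a3 <- A, a4 <- A]]].

Definition rA (A : seq R) (n : int) : nat :=
  count (fun d => d == n%:~R) (quad_vals A).

(* the (finite) set of integers n with r_A(n) > 0 *)
Definition rA_support (A : seq R) : seq int :=
  undup [seq Num.floor d | d <- quad_vals A & d \is a Num.int].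

(* I_3(A) = sum_{n in Z} r_A(n)^3 ; terms outside rA_support vanish *)
Definition I3 (A : seq R) : nat := \sum_(n <- rA_support A) (rA A n) ^ 3.
End Defs.

(* Main.v *)
Require Import Defs.
From HB Require Import structures.
From mathcomp Require Import all_boot all_order all_algebra.
From mathcomp Require Import reals exp.
From mathcomp Require Import zify ring lra.
Set Implicit Arguments. Unset Strict Implicit.
Import Order.TTheory GRing.Theory Num.Theory.

Lemma count_sumE (T : Type) (p : pred T) s : count p s = \sum_(x <- s) (p x : nat).
Proof. elim: s => [|x s IH]; by rewrite ?big_nil ?big_cons //= IH. Qed.

Lemma sum_countU (T : eqType) (U s : seq T) (F : T -> nat) : uniq U -> {subset s <= U} ->
  \sum_(x <- s) F x = \sum_(v <- U) count_mem v s * F v.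
Proof.
move=> uU; elim: s => [|x s IH] sU.
  by rewrite big_nil big1 // => v _; rewrite mul0n.
rewrite big_cons IH; last by move=> y ys; apply: sU; rewrite inE ys orbT.
have xU : x \in U by apply: sU; rewrite inE eqxx.
under [RHS]eq_bigr => v _ do rewrite /= mulnDl.
rewrite big_split /=; congr (_ + _).
rewrite (bigD1_seq x) //= eqxx mul1n big1 ?addn0 // => v vx.
by rewrite eq_sym (negbTE vx).
Qed.

Definition pc (T : eqType) (s t : seq T) := \sum_(x <- s) count_mem x t.
Arguments pc {T}.

Lemma pc_formula (T : eqType) (U s t : seq T) : uniq U -> {subset s <= U} -> {subset t <= U} ->
  pc s t = \sum_(v <- U) count_mem v s * count_mem v t.
Proof. by move=> uU sU tU; rewrite /pc (@sum_countU _ _ _ _ uU sU). Qed.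

Lemma pc_sym (T : eqType) (s t : seq T) : pc s t = pc t s.
Proof.
have uU := undup_uniq (s ++ t).
have sU : {subset s <= undup (s ++ t)} by move=> x; rewrite mem_undup mem_cat => ->.
have tU : {subset t <= undup (s ++ t)} by move=> x; rewrite mem_undup mem_cat orbC => ->.
rewrite (@pc_formula _ _ _ _ uU sU tU) (@pc_formula _ _ _ _ uU tU sU).
by apply: eq_bigr => v _; rewrite mulnC.
Qed.

Lemma pc_cs (T : eqType) (s t : seq T) : 2 * pc s t <= pc s s + pc t t.
Proof.
have uU := undup_uniq (s ++ t).
have sU : {subset s <= undup (s ++ t)} by move=> x; rewrite mem_undup mem_cat => ->.
have tU : {subset t <= undup (s ++ t)} by move=> x; rewrite mem_undup mem_cat orbC => ->.
rewrite (@pc_formula _ _ _ _ uU sU tU) (@pc_formula _ _ _ _ uU sU sU) (@pc_formula _ _ _ _ uU tU tU).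
rewrite big_distrr -big_split /=; apply: leq_sum => v _.
set a := count_mem v s; set b := count_mem v t.
case: (leqP a b) => h; [have [d ->] : exists d, b = a + d by exists (b - a); lia | have [d ->] : exists d, a = b + d by exists (a - b); lia]; nia.
Qed.

Lemma pc_catl (T : eqType) (s s' t : seq T) : pc (s ++ s') t = pc s t + pc s' t.
Proof. by rewrite /pc big_cat. Qed.

Lemma pc_catr (T : eqType) (s t t' : seq T) : pc s (t ++ t') = pc s t + pc s t'.
Proof. by rewrite /pc -big_split; apply: eq_bigr => x _; rewrite count_cat. Qed.

Lemma pc_cat2 (T : eqType) (s t : seq T) : pc (s ++ t) (s ++ t) <= 2 * (pc s s + pc t t).
Proof.
rewrite pc_catl !pc_catr (pc_sym t s); have := pc_cs s t; lia.
Qed.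

Lemma pc_perml (T : eqType) (s s' t : seq T) : perm_eq s s' -> pc s t = pc s' t.
Proof. by move=> p; rewrite /pc (perm_big _ p). Qed.

Lemma pc_permr (T : eqType) (s t t' : seq T) : perm_eq t t' -> pc s t = pc s t'.
Proof. by move=> p; rewrite (pc_sym s t) (pc_sym s t'); apply: pc_perml. Qed.

Lemma pc_map_inj (T T' : eqType) (f : T -> T') (s t : seq T) : injective f ->
  pc (map f s) (map f t) = pc s t.
Proof.
move=> fi; rewrite /pc big_map; apply: eq_bigr => x _.
by rewrite count_map; apply: eq_count => y /=; rewrite inj_eq.
Qed.

Lemma count_allpairs (S T U : Type) (f : S -> T -> U) (P : pred U) s t :
  count P [seq f x y | x <- s, y <- t] = \sum_(x <- s) count (fun y => P (f x y)) t.
Proof.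
elim: s => [|x s IH]; first by rewrite big_nil.
by rewrite big_cons /= count_cat IH count_map.
Qed.

Local Open Scope ring_scope.

Section S.
Variable R : realType.

Definition prods (A : seq R) := [seq a1 * a2 | a1 <- A, a2 <- A].

Lemma rA_pc (A : seq R) (c : R) :
  count (fun d => d == c) (quad_vals A) = pc (prods A) (map (fun y => y + c) (prods A)).
Proof.
rewrite /quad_vals count_map count_allpairs /pc; apply: eq_bigr => x _.
rewrite count_map; apply: eq_count => y /=.
by rewrite subr_eq addrC eq_sym.
Qed.

Lemma rA_0 (A : seq R) : rA A 0 = pc (prods A) (prods A).
Proof.
rewrite /rA rA_pc; congr pc.
by rewrite (eq_map (fun y => addr0 y)) map_id.
Qed.

Lemma part1 (A : seq R) (n : int) : (rA A n <= rA A 0)%N.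
Proof.
rewrite /rA rA_pc -/(rA A 0) rA_0.
have := pc_cs (prods A) (map (fun y => y + n%:~R) (prods A)).
rewrite pc_map_inj; last exact: addIr.
by rewrite addnn -mul2n leq_pmul2l.
Qed.
End S.


Section S.
Variable R : realType.
Implicit Types (B : seq R) (v w : R).

Definition pairsL B := [seq (a, b) | a <- B, b <- B].
Definition Pp B := [seq p <- pairsL B | 0 < p.1].
Definition L B v := [seq p <- Pp B | p.2 == v * p.1].
Definition padd (p q : R * R) := (p.1 + q.1, p.2 + q.2).
Definition block B v w := [seq padd p q | p <- L B v, q <- L B w].
Fixpoint W B (s : seq R) : seq (R * R) :=
  match s with
  | v :: s' => match s' with w :: _ => block B v w ++ W B s' | [::] => [::] end
  | [::] => [::]
  end.

Lemma L_prop B v p : p \in L B v -> [/\ p.1 \in B, p.2 \in B, 0 < p.1 & p.2 = v * p.1].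
Proof.
rewrite !mem_filter => /andP [/eqP e /andP [pos /allpairsP [[a b] /= [aB bB ep]]]].
by move: e pos; rewrite ep.
Qed.

Lemma mem_sumset B a b : a \in B -> b \in B -> a + b \in sumset B.
Proof. by move=> aB bB; rewrite mem_undup; apply/allpairsP; exists (a, b). Qed.

Lemma block_prop B v w x : v < w -> x \in block B v w ->
  [/\ 0 < x.1, v * x.1 < x.2, x.2 < w * x.1, x.1 \in sumset B & x.2 \in sumset B].
Proof.
move=> vw /allpairsP [[p q] /= [/L_prop [p1 p2 pp ep] /L_prop [q1 q2 qp eq] ->]].
rewrite /padd /=; split; first by lra.
- rewrite ep eq mulrDr ltrD2l; by rewrite !(mulrC _ q.1) ltr_pM2l.
- rewrite ep eq mulrDr ltrD2r; by rewrite !(mulrC _ p.1) ltr_pM2l.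
- exact: mem_sumset.
- exact: mem_sumset.
Qed.

Lemma W_prop B (s : seq R) v x : sorted <%O (v :: s) -> x \in W B (v :: s) ->
  [/\ 0 < x.1, v * x.1 < x.2, x.1 \in sumset B & x.2 \in sumset B].
Proof.
elim: s v => [|w s IH] v //= /andP [vw ss]; rewrite mem_cat => /orP [xb | xW].
  by case: (block_prop vw xb).
case: (IH w ss xW) => x1 x2 s1 s2; split => //.
by apply: lt_trans x2; rewrite ltr_pM2r.
Qed.

Lemma L_uniq B v : uniq B -> uniq (L B v).
Proof.
move=> uB; rewrite !filter_uniq // allpairs_uniq // => [[a b] [c d]] _ _ /= [-> ->] //.
Qed.

Lemma block_uniq B v w : uniq B -> v < w -> uniq (block B v w).
Proof.
move=> uB vw; rewrite allpairs_uniq ?L_uniq //.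
move=> [p q] [p' q'] /allpairsP [[p0 q0] /= [pL qL [-> ->]]]
  /allpairsP [[p1 q1] /= [pL' qL' [-> ->]]] /= [e1 e2].
case: (L_prop pL) => _ _ _ ep; case: (L_prop qL) => _ _ _ eq.
case: (L_prop pL') => _ _ _ ep'; case: (L_prop qL') => _ _ _ eq'.
have hq : q0.1 = q1.1.
  have : (w - v) * q0.1 = (w - v) * q1.1.
    have : p0.2 + q0.2 - v * (p0.1 + q0.1) = p1.2 + q1.2 - v * (p1.1 + q1.1) by rewrite e1 e2.
    rewrite ep eq ep' eq'; lra.
  by move/mulfI; apply; rewrite subr_eq0 gt_eqF.
have hp : p0.1 = p1.1 by move: e1; rewrite hq => /addIr.
by case: p0 p1 q0 q1 ep ep' eq eq' hp hq {pL qL pL' qL' e1 e2} => [a b] [c d] [e f] [g h] /= -> -> -> -> -> ->.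
Qed.

Lemma W_uniq B (s : seq R) : uniq B -> sorted <%O s -> uniq (W B s).
Proof.
move=> uB; elim: s => [|v [|w s] IH] //= /andP [vw ss].
rewrite cat_uniq block_uniq //= IH // andbT.
apply/hasPn => x xW; apply/negP => xb.
case: (block_prop vw xb) => _ _ h _ _.
case: (W_prop ss xW) => _ h' _ _; lra.
Qed.

Lemma W_size B (s : seq R) (t : nat) : (forall v, v \in s -> (t <= size (L B v))%N) ->
  ((size s).-1 * t ^ 2 <= size (W B s))%N.
Proof.
elim: s => [|v [|w s] IH] //= hs.
rewrite size_cat size_allpairs mulSn.
apply: leq_add.
  by rewrite expnS expn1 leq_mul // hs // !inE eqxx ?orbT.
by apply: IH => u us; apply: hs; rewrite in_cons us orbT.
Qed.

Lemma W_bound B (s : seq R) : uniq B -> sorted <%O s -> (size (W B s) <= size (sumset B) ^ 2)%N.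
Proof.
move=> uB ss.
have -> : (size (sumset B) ^ 2 = size [seq (x, y) | x <- sumset B, y <- sumset B])%N.
  by rewrite size_allpairs.
apply: uniq_leq_size; first exact: W_uniq.
case: s ss => [|v s] ss x //; move=> xW.
case: (W_prop ss xW) => _ _ h1 h2; apply/allpairsP; exists (x.1, x.2); split => //.
by case: x {xW h1 h2}.
Qed.

Definition sl (p : R * R) := p.2 / p.1.
Definition mm B v := count (fun p => sl p == v) (Pp B).
Definition Tp B := pc (map sl (Pp B)) (map sl (Pp B)).

Lemma mm_L B v : mm B v = size (L B v).
Proof.
rewrite /mm size_filter; apply: eq_in_count => p.
rewrite mem_filter => /andP [pos _].
have h : p.1 != 0 by rewrite gt_eqF.
by rewrite /sl -[v in _ == v]divr1 (eqr_div _ _ h (oner_neq0 R)) mulr1.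
Qed.

Lemma mm_le B v : uniq B -> (mm B v <= size B)%N.
Proof.
move=> uB; rewrite mm_L -(size_map fst).
apply: uniq_leq_size.
  rewrite map_inj_in_uniq ?L_uniq // => p q pL qL e.
  case: (L_prop pL) => _ _ _ ep; case: (L_prop qL) => _ _ _ eq.
  by case: p q ep eq e {pL qL} => [a b] [c d] /= -> -> ->.
by move=> x /mapP [p pL ->]; case: (L_prop pL).
Qed.

Lemma sq_layer (m N : nat) : (\sum_(t < N) (2 * t + 1) * (t < m) = minn m N ^ 2)%N.
Proof.
elim: N => [|N IH]; first by rewrite big_ord0 minn0.
rewrite big_ord_recr /= IH.
case: (ltnP N m) => h.
  have e2 : minn m N.+1 = N.+1 by lia.
  rewrite e2 muln1; lia.
have e2 : minn m N.+1 = m by lia.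
by rewrite e2 muln0 addn0.
Qed.

Definition kk B (t : nat) := count (fun v => (t < mm B v)%N) (undup (map sl (Pp B))).

Lemma Tp_layer B : uniq B -> Tp B = (\sum_(t < size B) (2 * t + 1) * kk B t)%N.
Proof.
move=> uB.
have uU := undup_uniq (map sl (Pp B)).
have sU : {subset map sl (Pp B) <= undup (map sl (Pp B))} by move=> x; rewrite mem_undup.
rewrite /Tp (pc_formula uU sU sU).
have cm v : count_mem v (map sl (Pp B)) = mm B v by rewrite count_map.
under eq_bigr => v _ do rewrite cm mulnn -(minn_idPl (mm_le v uB)) -sq_layer.
rewrite exchange_big /=; apply: eq_bigr => t _.
by rewrite /kk count_sumE big_distrr.
Qed.

Lemma kk_cone B t : uniq B -> ((kk B t).-1 * t.+1 ^ 2 <= size (sumset B) ^ 2)%N.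
Proof.
move=> uB.
set V := sort <=%O [seq v <- undup (map sl (Pp B)) | (t < mm B v)%N].
have sV : sorted <%O V by rewrite sort_lt_sorted filter_uniq // undup_uniq.
have -> : kk B t = size V by rewrite size_sort size_filter.
apply: leq_trans (W_bound uB sV).
apply: W_size => v; rewrite mem_sort mem_filter => /andP [h _].
by rewrite -mm_L.
Qed.
End S.


Section S.
Variable R : realType.

Lemma sum_odd N : (\sum_(t < N) (2 * t + 1) = N ^ 2)%N.
Proof.
elim: N => [|N IH]; first by rewrite big_ord0.
rewrite big_ord_recr /= IH; lia.
Qed.

Lemma real_layer (N S : nat) (k : nat -> nat) :
  (forall t, (k t).-1 * t.+1 ^ 2 <= S ^ 2)%N ->
  ((\sum_(t < N) (2 * t + 1) * k t)%N)%:R <=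
    2 * S%:R ^+ 2 * (\sum_(t < N) (t.+1%:R : R)^-1) + N%:R ^+ 2.
Proof.
move=> hk.
rewrite -[N%:R ^+ 2]natrX -(sum_odd N) !natr_sum mulr_sumr -big_split /=.
apply: ler_sum => t _.
have h1 : ((2 * t + 1) * k t <= (2 * t + 1) * (k t).-1 + (2 * t + 1))%N.
  by case: (k t) => [|j] /=; lia.
have h2 : ((2 * t + 1) * (k t).-1 * t.+1 <= 2 * S ^ 2)%N.
  have := hk t; set j := (k t).-1; nia.
apply: le_trans (_ : ((2 * t + 1) * (k t).-1)%:R + ((2 * t + 1)%N)%:R <= _).
  by rewrite -natrD ler_nat.
apply: lerD => //.
have tp : (0 : R) < t.+1%:R by rewrite ltr0n.
rewrite ler_pdivlMr // -natrX -natrM -!natrM ler_nat.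
exact: h2.
Qed.

Lemma ln_step (N : nat) : (0 < N)%N ->
  ln (N%:R : R) + (N.+1%:R)^-1 <= ln (N.+1%:R).
Proof.
move=> N0.
have p1 : (0 : R) < N%:R by rewrite ltr0n.
have p2 : (0 : R) < N.+1%:R by rewrite ltr0n.
have i2 : (0 : R) < (N.+1%:R)^-1 by rewrite invr_gt0.
have := @le_ln1Dx R (- (N.+1%:R)^-1).
have e : 1 + - (N.+1%:R : R)^-1 = N%:R / N.+1%:R.
  have nz : (N%:R + 1 : R) != 0 by rewrite -mulrSr lt0r_neq0.
  by rewrite mulrSr; field.
rewrite e ln_div ?posrE //.
have : (N.+1%:R : R)^-1 < 1.
  by rewrite invf_lt1 // ltr1n ltnS.
move=> h1 h2; have h3 : -1 < - (N.+1%:R : R)^-1 by rewrite ltrN2.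
have := h2 h3; set x := (N.+1%:R : R)^-1; set a := ln _; set b := ln _; lra.
Qed.

Lemma harm (N : nat) : (0 < N)%N -> \sum_(t < N) (t.+1%:R : R)^-1 <= 1 + ln (N%:R).
Proof.
elim: N => [|N IH] // _.
case: N IH => [|N] IH.
  by rewrite big_ord_recr big_ord0 /= ln1 invr1 add0r addr0.
rewrite big_ord_recr /=.
move: (IH isT) (@ln_step N.+1 isT) => h2 h1.
apply: le_trans (lerD h2 (lexx _)) _.
by rewrite -addrA lerD2l.
Qed.

Lemma ln2_ge : (1 / 2 : R) <= ln 2.
Proof.
have := @le_ln1Dx R (- (1 / 2)).
have e : 1 + - (1 / 2) = (2 : R)^-1 by field.
rewrite e lnV ?posrE //.
move=> h; have h3 : -1 < - (1 / 2 : R) by lra.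
have := h h3; lra.
Qed.
End S.


Lemma allpairs_map2 (S T U S' T' : Type) (f : S -> T -> U) (g : S' -> S) (h : T' -> T) s t :
  [seq f x y | x <- map g s, y <- map h t] = [seq f (g x) (h y) | x <- s, y <- t].
Proof. by elim: s => [|x s IH] //=; rewrite IH -map_comp. Qed.

Lemma map_allpairs (S T U V : Type) (f : S -> T -> U) (k : U -> V) s t :
  map k [seq f x y | x <- s, y <- t] = [seq k (f x y) | x <- s, y <- t].
Proof. by elim: s => [|x s IH] //=; rewrite map_cat IH -map_comp. Qed.

Lemma size_ap (S T U : Type) (f : S -> T -> U) s t :
  size [seq f x y | x <- s, y <- t] = (size s * size t)%N.
Proof. by elim: s => [|x s IH] //=; rewrite size_cat IH size_map. Qed.

Lemma count_le1 (T : eqType) (P : pred T) (U : seq T) : uniq U ->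
  (forall n m, P n -> P m -> n = m) -> (count P U <= 1)%N.
Proof.
move=> uU hP; rewrite -size_filter.
have uf := filter_uniq P uU.
have mf x : x \in filter P U -> P x by rewrite mem_filter => /andP [].
case E: (filter P U) uf mf => [|x [|y r]] //= /andP [nx _] mf.
have Px := mf x; have Py := mf y.
rewrite (hP x y (Px _) (Py _)) ?inE ?eqxx ?orbT // in nx.
Qed.

Arguments sl {R}.
Section S.
Variable R : realType.
Implicit Types (A B : seq R).

Lemma sumset_opp A : size (sumset (map -%R A)) = size (sumset A).
Proof.
rewrite /sumset allpairs_map2.
have -> : [seq - x + - y | x <- A, y <- A] = map -%R [seq x + y | x <- A, y <- A].
  elim: A {1 3}A => [|x s IH] t //=; rewrite map_cat IH; congr (_ ++ _).
  by rewrite -map_comp; apply: eq_map => y /=; rewrite opprD.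
by rewrite undup_map_inj ?size_map //; exact: oppr_inj.
Qed.

Lemma Tp_bound B : uniq B ->
  (Tp B)%:R <= 2 * (size (sumset B))%:R ^+ 2 * (\sum_(t < size B) (t.+1%:R : R)^-1)
     + (size B)%:R ^+ 2.
Proof.
move=> uB; rewrite Tp_layer //; apply: real_layer => t; exact: kk_cone.
Qed.

Definition Pnz A := [seq p <- pairsL A | p.1 != 0].

Lemma Pnz_pos A : [seq p <- Pnz A | 0 < p.1] = Pp A.
Proof.
rewrite /Pnz /Pp -filter_predI; apply: eq_filter => p /=.
by apply/andP/idP => [[]//|h]; split => //; rewrite gt_eqF.
Qed.

Definition negp (p : R * R) := (- p.1, - p.2).

Lemma sl_negp p : sl (negp p) = sl p.
Proof. by rewrite /sl /negp /= invrN mulrNN. Qed.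

Lemma Pnz_neg A : map sl [seq p <- Pnz A | predC (fun p : R * R => 0 < p.1) p] =
   map sl (Pp (map -%R A)).
Proof.
rewrite /Pp /pairsL allpairs_map2.
have -> : [seq (- x, - y) | x <- A, y <- A] = map negp [seq (x, y) | x <- A, y <- A].
  by rewrite map_allpairs.
rewrite filter_map -map_comp (eq_map sl_negp) /Pnz -filter_predI.
congr map; apply: eq_filter => p /=.
rewrite oppr_gt0; case: (ltrgt0P p.1) => //=.
Qed.

Lemma Tnz_bound A : (pc (map sl (Pnz A)) (map sl (Pnz A)) <= 2 * (Tp A + Tp (map -%R A)))%N.
Proof.
have pe : perm_eq (Pnz A) ([seq p <- Pnz A | 0 < p.1] ++
     [seq p <- Pnz A | predC (fun p : R * R => 0 < p.1) p]).
  by rewrite perm_sym perm_filterC.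
have pm := perm_map sl pe.
rewrite (pc_perml _ pm) (pc_permr _ pm) map_cat.
apply: leq_trans (pc_cat2 _ _) _.
by rewrite Pnz_pos Pnz_neg.
Qed.

Lemma pt (a b c d : R) : ((c * d == a * b)%R <=
   ((a == 0%R) + (b == 0%R)) * ((c == 0%R) + (d == 0%R)) + [&& c != 0%R, b != 0%R & (a / c == d / b)%R])%N.
Proof.
case E: (c * d == a * b) => //; move/eqP: E => E.
have [c0|c0] := eqVneq c 0.
  have : a * b == 0 by rewrite -E c0 mul0r.
  rewrite mulf_eq0 => /orP [] /eqP ->; rewrite eqxx /=; lia.
have [b0|b0] := eqVneq b 0.
  have : c * d == 0 by rewrite E b0 mulr0.
  rewrite mulf_eq0 (negbTE c0) /= => /eqP d0.
  rewrite d0 !eqxx /=; lia.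
rewrite eqr_div // -E [d * c]mulrC eqxx /=; lia.
Qed.

Lemma rA0_sum A : rA A 0 = (\sum_(a <- A) \sum_(b <- A) \sum_(c <- A) \sum_(d <- A)
   ((c * d == a * b)%R : nat))%N.
Proof.
rewrite rA_0 /pc /prods big_allpairs_dep; apply: eq_bigr => a _; apply: eq_bigr => b _.
by rewrite count_allpairs; apply: eq_bigr => c _; rewrite count_sumE.
Qed.

Lemma slope_part A : (\sum_(a <- A) \sum_(b <- A) \sum_(c <- A) \sum_(d <- A)
   [&& c != 0%R, b != 0%R & (a / c == d / b)%R] = pc (map sl (Pnz A)) (map sl (Pnz A)))%N.
Proof.
under eq_bigr => a _ do rewrite exchange_big.
rewrite exchange_big /pc big_map /Pnz big_filter [RHS]big_mkcond /pairsL big_allpairs /=.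
apply: eq_bigr => c _; apply: eq_bigr => a _.
case: (eqVneq c 0%R) => [c0|c0] /=.
  by rewrite big1 // => b _; rewrite big1.
rewrite count_map count_filter count_sumE big_allpairs /=.
apply: eq_bigr => b _; apply: eq_bigr => d _.
by rewrite /sl /= andbC eq_sym.
Qed.

Lemma zero_part A : uniq A -> (\sum_(a <- A) \sum_(b <- A) \sum_(c <- A) \sum_(d <- A)
   (((a == 0%R) + (b == 0%R)) * ((c == 0%R) + (d == 0%R))) <= (2 * size A) ^ 2)%N.
Proof.
move=> uA.
set Z := (\sum_(c <- A) \sum_(d <- A) ((c == 0%R) + (d == 0%R)))%N.
have -> : (\sum_(a <- A) \sum_(b <- A) \sum_(c <- A) \sum_(d <- A)
   (((a == 0%R) + (b == 0%R)) * ((c == 0%R) + (d == 0%R))) = Z * Z)%N.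
  rewrite /Z big_distrl; apply: eq_bigr => a _; rewrite big_distrl; apply: eq_bigr => b _.
  by rewrite big_distrr; apply: eq_bigr => c _; rewrite big_distrr.
have c0 : (count (fun x => x == 0%R) A <= 1)%N.
  by apply: count_le1 => // n m /eqP -> /eqP ->.
have hZ : (Z <= 2 * size A)%N.
  rewrite /Z; under eq_bigr => c _ do rewrite big_split /=.
  rewrite big_split /= exchange_big mul2n -addnn.
  by apply: leq_add; rewrite -sum1_size; apply: leq_sum => x _;
    rewrite -(count_sumE (fun i => i == 0%R)).
rewrite expnS expn1; exact: leq_mul.
Qed.

Lemma sum4_split (s : seq R) (F G : R -> R -> R -> R -> nat) :
  (\sum_(a <- s) \sum_(b <- s) \sum_(c <- s) \sum_(d <- s) (F a b c d + G a b c d) =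
   \sum_(a <- s) \sum_(b <- s) \sum_(c <- s) \sum_(d <- s) F a b c d +
   \sum_(a <- s) \sum_(b <- s) \sum_(c <- s) \sum_(d <- s) G a b c d)%N.
Proof.
rewrite -big_split; apply: eq_bigr => a _; rewrite -big_split; apply: eq_bigr => b _.
rewrite -big_split; apply: eq_bigr => c _; by rewrite -big_split.
Qed.

Lemma r0_nat A : uniq A -> (rA A 0 <= (2 * size A) ^ 2 + 2 * (Tp A + Tp (map -%R A)))%N.
Proof.
move=> uA; rewrite rA0_sum.
apply: leq_trans (_ : _ <= \sum_(a <- A) \sum_(b <- A) \sum_(c <- A) \sum_(d <- A)
   ((((a == 0%R) + (b == 0%R)) * ((c == 0%R) + (d == 0%R))) +
     [&& c != 0%R, b != 0%R & (a / c == d / b)%R]))%N _.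
  apply: leq_sum => a _; apply: leq_sum => b _; apply: leq_sum => c _; apply: leq_sum => d _.
  exact: pt.
rewrite sum4_split slope_part; apply: leq_add; first exact: zero_part.
exact: Tnz_bound.
Qed.

Lemma sum_count_disj (U : seq int) (Q : seq R) : uniq U ->
  (\sum_(n <- U) count (fun d => d == n%:~R) Q <= size Q)%N.
Proof.
move=> uU; elim: Q => [|d Q IH] /=.
  by rewrite big1.
rewrite big_split /= -[(size Q).+1]add1n; apply: leq_add => //.
rewrite -(count_sumE (fun n : int => d == n%:~R)); apply: count_le1 => // n m /eqP -> /eqP.
exact: intr_inj.
Qed.

Lemma I3_nat A : (I3 A <= rA A 0 ^ 2 * size A ^ 4)%N.
Proof.
rewrite /I3.
apply: leq_trans (_ : _ <= \sum_(n <- rA_support A) rA A 0 ^ 2 * rA A n)%N _.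
  apply: leq_sum => n _; rewrite expnS mulnC leq_mul2r; apply/orP; right.
  by rewrite leq_exp2r // part1.
rewrite -big_distrr /= leq_mul2l; apply/orP; right.
apply: leq_trans (sum_count_disj _ (undup_uniq _)) _.
rewrite /quad_vals !size_map !size_ap; apply: eq_leq; ring.
Qed.
End S.


Section S.
Variable R : realType.

Lemma r0_real (A : seq R) (K : R) : uniq A -> A != [::] -> 1 <= K ->
  (size (sumset A))%:R = K * (size A)%:R ->
  (rA A 0)%:R <= 40 * (K ^+ 2 * (size A)%:R ^+ 2 * ln (2 * (size A)%:R)).
Proof.
move=> uA A0 K1 hS.
have N1 : (0 < size A)%N by rewrite lt0n size_eq0.
have h0 := r0_nat uA.
have t1 := Tp_bound uA.
have uA' : uniq (map -%R A) by rewrite map_inj_uniq //; exact: oppr_inj.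
have t2 := Tp_bound uA'.
rewrite size_map sumset_opp in t2.
have hH := @harm R _ N1.
move: hS t1 t2 hH; set N := size A; set S := size (sumset A); set h := \sum_(t < N) _.
move=> hS t1 t2 hH.
have r1 : (rA A 0)%:R <= ((2 * N) ^ 2)%N%:R + 2 * ((Tp A)%:R + (Tp (map -%R A))%:R) :> R.
  by rewrite -natrD -natrM -natrD ler_nat.
rewrite natrX natrM exprMn in r1.
have n1 : (1 : R) <= N%:R by rewrite ler1n.
have ln0 : 0 <= ln (N%:R : R) by rewrite ln_ge0.
have l2 : ln (2 * N%:R : R) = ln 2 + ln N%:R by rewrite lnM ?posrE ?ltr0n.
have l2h := @ln2_ge R.
have e : K ^+ 2 * N%:R ^+ 2 = S%:R ^+ 2 by rewrite hS exprMn.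
rewrite e l2.
have s0 : 0 <= (S%:R : R) ^+ 2 by rewrite exprn_ge0.
have f1 : S%:R ^+ 2 * h <= S%:R ^+ 2 * (1 + ln N%:R) by rewrite ler_wpM2l.
have f2 : (N%:R : R) ^+ 2 <= S%:R ^+ 2.
  rewrite hS exprMn -[X in X <= _]mul1r ler_wpM2r ?exprn_ge0 //.
  by rewrite expr_ge1 // (le_trans ler01 K1).
have f3 : (S%:R : R) ^+ 2 * (1 / 2 + ln N%:R) <= S%:R ^+ 2 * (ln 2 + ln N%:R).
  by apply: (ler_wpM2l s0); rewrite lerD2r.
have f4 : 0 <= (S%:R : R) ^+ 2 * ln N%:R by rewrite mulr_ge0.
move: r1 t1 t2 f1 f2 f3 s0 ln0 f4.
set r := (rA A 0)%:R; set a := (Tp A)%:R; set b := (Tp _)%:R; set s := S%:R ^+ 2.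
set n := N%:R ^+ 2; set l := ln N%:R; set l0 := ln 2.
move=> r1 t1 t2 f1 f2 f3 s0 ln0 f4.
lra.
Qed.
End S.

Theorem lemma6p1 :
  exists C : nat, forall (R : realType) (A : seq R) (K : R),
    uniq A -> A != [::] -> 1 <= K ->
    (size (sumset A))%:R = K * (size A)%:R ->
    [/\ (forall n : int, (rA A n <= rA A 0)%N),
        (rA A 0)%:R <= C%:R * K ^+ 2 * (size A)%:R ^+ 2 * ln (2 * (size A)%:R)
      & (I3 A)%:R <= C%:R * K ^+ 4 * (size A)%:R ^+ 8 * (ln (2 * (size A)%:R)) ^+ 2].
Proof.
exists 1600%N => R A K uA A0 K1 hS.
have r0 := r0_real uA A0 K1 hS.
have N1 : (0 < size A)%N by rewrite lt0n size_eq0.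
set X := K ^+ 2 * (size A)%:R ^+ 2 * ln (2 * (size A)%:R) in r0.
have X0 : 0 <= X.
  have n1 : (1 : R) <= (size A)%:R by rewrite ler1n.
  have l0 : 0 <= ln (2 * (size A)%:R : R) by apply: ln_ge0; lra.
  have k0 : 0 <= K ^+ 2 by rewrite exprn_ge0 // (le_trans ler01 K1).
  have nn : 0 <= (size A)%:R ^+ 2 :> R by rewrite exprn_ge0 // ler0n.
  by rewrite /X; apply: mulr_ge0 => //; apply: mulr_ge0.
have r00 : (0 : R) <= (rA A 0)%:R by [].
split.
- exact: part1.
- have e : 1600%:R * K ^+ 2 * (size A)%:R ^+ 2 * ln (2 * (size A)%:R) = 1600%:R * X :> R.
    by rewrite /X; ring.
  rewrite e; apply: le_trans r0 _.
  by apply: ler_wpM2r => //; rewrite ler_nat.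
- have i3 := I3_nat A.
  have i3' : (I3 A)%:R <= (rA A 0)%:R ^+ 2 * (size A)%:R ^+ 4 :> R.
    by rewrite -!natrX -natrM ler_nat.
  apply: le_trans i3' _.
  have : (rA A 0)%:R ^+ 2 <= (40 * X) ^+ 2 :> R.
    by rewrite !expr2; apply: ler_pM.
  move=> h.
  have e : 1600%:R * K ^+ 4 * (size A)%:R ^+ 8 * ln (2 * (size A)%:R) ^+ 2 =
     (40 * X) ^+ 2 * (size A)%:R ^+ 4 :> R.
    by rewrite /X; ring.
  rewrite e; apply: ler_wpM2r => //; exact: exprn_ge0.
Qed.
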